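(* Let $K$ be a differential field of characteristic $0$ and let $M$ be a differential module over $K$ of dimension $4$ with $\det M=\mathbf{1}$. Then $M$ is isomorphic to $A\otimes B$ for differential modules $A,B$ of dimension $2$ with $\det A=\det B=\mathbf{1}$ if and only if there exists $F\in\mathrm{sym}^2M$ with $\partial F=0$ such that $F$ is non degenerate and has an isotropic subspace of dimension $2$.
   Context: A differential module over $K$ is a finite-dimensional $K$-vector space with an additive map $\partial$ satisfying the Leibniz rule; $\mathrm{sym}^2M$ and tensor products carry the induced derivations, $\det M=\Lambda^{\dim M}M$, and $\mathbf{1}$ is the trivial one-dimensional module. An element $F\in\mathrm{sym}^2M$ defines a symmetric bilinear form $(a,b)=F(a\otimes b)$ on $M^*$; non degenerate and (totally) isotropic subspace refer to this form. *)

(* Defs.v *)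
From HB Require Import structures.
From mathcomp Require Import all_boot all_order all_algebra.
Set Implicit Arguments. Unset Strict Implicit. Unset Printing Implicit Defensive.
Import GRing.Theory.
Local Open Scope ring_scope.

Definition derivation (K : fieldType) (d : K -> K) : Prop :=
  (forall a b, d (a + b) = d a + d b) /\ (forall a b, d (a * b) = d a * b + a * d b).

Definition is_dmod (K : fieldType) (d : K -> K) (n : nat)
  (D : 'rV[K]_n -> 'rV[K]_n) : Prop :=
  (forall u v, D (u + v) = D u + D v) /\
  (forall (a : K) v, D (a *: v) = d a *: v + a *: D v).

Definition conn (K : fieldType) (n : nat) (D : 'rV[K]_n -> 'rV[K]_n) : 'M[K]_n :=
  \matrix_(i < n) D (delta_mx 0 i).

Definition dmod_iso (K : fieldType) (n : nat) (D1 D2 : 'rV[K]_n -> 'rV[K]_n) : Prop :=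
  exists P : 'M[K]_n, P \in unitmx /\ forall v, D2 (v *m P) = D1 v *m P.

Definition unitD (K : fieldType) (d : K -> K) : 'rV[K]_1 -> 'rV[K]_1 :=
  fun v => map_mx d v.

(* det M = Lambda^n M, one-dimensional with basis w = e_1 /\ ... /\ e_n;
   its induced derivation is  D(a w) = (d a + tr(C) a) w  where C = conn D,
   since  D(w) = sum_i e_1 /\ .. D(e_i) .. /\ e_n = tr(C) w. *)
Definition detD (K : fieldType) (d : K -> K) (n : nat) (D : 'rV[K]_n -> 'rV[K]_n)
  : 'rV[K]_1 -> 'rV[K]_1 :=
  fun v => map_mx d v + \tr (conn D) *: v.

Definition det_trivial (K : fieldType) (d : K -> K) (n : nat)
  (D : 'rV[K]_n -> 'rV[K]_n) : Prop := dmod_iso (detD d D) (unitD d).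

(* Tensor product A (x) B: elements of K^m (x) K^p are m x p matrices X
   (X = sum X_ij e_i (x) f_j), flattened by mxvec; induced derivation
   D(a (x) b) = D a (x) b + a (x) D b. *)
Definition tensorD (K : fieldType) (d : K -> K) (m p : nat)
  (DA : 'rV[K]_m -> 'rV[K]_m) (DB : 'rV[K]_p -> 'rV[K]_p)
  : 'rV[K]_(m * p) -> 'rV[K]_(m * p) :=
  fun w => let X := vec_mx w in
    mxvec (map_mx d X + (conn DA)^T *m X + X *m conn DB).

(* Derivation induced on M (x) M (elements as n x n coefficient matrices). *)
Definition tensor2D (K : fieldType) (d : K -> K) (n : nat)
  (D : 'rV[K]_n -> 'rV[K]_n) (X : 'M[K]_n) : 'M[K]_n :=
  map_mx d X + (conn D)^T *m X + X *m conn D.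

(* sym^2 M realised as the symmetric tensors in M (x) M. *)
Definition is_sym2_elt (K : fieldType) (n : nat) (F : 'M[K]_n) : Prop := F^T = F.

(* F defines the bilinear form (a,b) = a F b^T on M^* (dual coordinates). *)
Definition nondeg_form (K : fieldType) (n : nat) (F : 'M[K]_n) : Prop :=
  \det F != 0.

(* W : k x n matrix of rank k spans a k-dimensional subspace of M^*,
   totally isotropic for the form defined by F. *)
Definition has_isotropic_subsp (K : fieldType) (n k : nat) (F : 'M[K]_n) : Prop :=
  exists W : 'M[K]_(k, n), \rank W = k /\ W *m F *m W^T = 0.

(* Main.v *)
Require Import Defs.
From HB Require Import structures.
From mathcomp Require Import all_boot all_order all_algebra.
From mathcomp Require Import ring.
Set Implicit Arguments. Unset Strict Implicit. Unset Printing Implicit Defensive.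
Import GRing.Theory.
Local Open Scope ring_scope.


Section Deriv.
Variables (K : fieldType) (d : K -> K).
Hypothesis hd : derivation d.

Lemma dD a b : d (a + b) = d a + d b. Proof. by case: hd. Qed.
Lemma dM a b : d (a * b) = d a * b + a * d b. Proof. by case: hd. Qed.
Lemma d0 : d 0 = 0.
Proof. by apply: (@addrI _ (d 0)); rewrite -dD !addr0. Qed.
Lemma d1 : d 1 = 0.
Proof. have h := dM 1 1; rewrite !mul1r mulr1 in h; apply: (@addrI _ (d 1)); by rewrite -h addr0. Qed.
Lemma dN a : d (- a) = - d a.
Proof. by apply/eqP; rewrite -addr_eq0 -dD addNr d0. Qed.
Lemma dN1 : d (-1) = 0. Proof. by rewrite dN d1 oppr0. Qed.
Lemma dsum I (r : seq I) (P : pred I) (F : I -> K) :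
  d (\sum_(i <- r | P i) F i) = \sum_(i <- r | P i) d (F i).
Proof. exact: (big_morph d dD d0). Qed.
Lemma dV a : a != 0 -> d (a^-1) = - d a / (a * a).
Proof.
move=> a0; have := dM a a^-1; rewrite mulfV // d1 => /esym/eqP.
rewrite addr_eq0 => /eqP h.
have -> : d a^-1 = a^-1 * (a * d a^-1) by rewrite mulrA mulVf ?mul1r.
have h2 : a * d a^-1 = - (d a / a) by rewrite h opprK.
by rewrite h2; field.
Qed.

Notation dm := (map_mx d).

Lemma dmD m n (A B : 'M[K]_(m,n)) : dm (A + B) = dm A + dm B.
Proof. by apply/matrixP=> i j; rewrite !mxE dD. Qed.
Lemma dmN m n (A : 'M[K]_(m,n)) : dm (- A) = - dm A.
Proof. by apply/matrixP=> i j; rewrite !mxE dN. Qed.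
Lemma dm0 m n : dm (0 : 'M[K]_(m,n)) = 0.
Proof. by apply/matrixP=> i j; rewrite !mxE d0. Qed.
Lemma dmM m n p (A : 'M[K]_(m,n)) (B : 'M[K]_(n,p)) :
  dm (A *m B) = dm A *m B + A *m dm B.
Proof.
apply/matrixP=> i j; rewrite !mxE dsum -big_split /=.
by apply: eq_bigr => k _; rewrite dM !mxE.
Qed.
Lemma dmT m n (A : 'M[K]_(m,n)) : dm (A^T) = (dm A)^T.
Proof. by apply/matrixP=> i j; rewrite !mxE. Qed.
Lemma dmZ m n a (A : 'M[K]_(m,n)) : dm (a *: A) = d a *: A + a *: dm A.
Proof. by apply/matrixP=> i j; rewrite !mxE dM. Qed.
Lemma dm_delta m n i j : dm (delta_mx i j : 'M[K]_(m,n)) = 0.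
Proof. by apply/matrixP=> a b; rewrite !mxE; case: (_ && _); rewrite ?d1 ?d0. Qed.
Lemma dm1 n : dm (1%:M : 'M[K]_n) = 0.
Proof. by apply/matrixP=> a b; rewrite !mxE; case: (_ == _); rewrite ?d1 ?d0. Qed.

Definition dmodC n (C : 'M[K]_n) (v : 'rV[K]_n) := dm v + v *m C.

Lemma dmod_form n (D : 'rV[K]_n -> 'rV[K]_n) : is_dmod d D ->
  forall v, D v = dmodC (conn D) v.
Proof.
case=> hadd hsc v.
have D0 : D 0 = 0.
  by apply: (@addrI _ (D 0)); rewrite -hadd !addr0.
have Dsum : forall (I : Type) (r : seq I) (F : I -> 'rV[K]_n),
  D (\sum_(i <- r) F i) = \sum_(i <- r) D (F i).
  by move=> I r F; apply: (big_morph D hadd D0).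
rewrite /dmodC {1}[v]matrix_sum_delta big_ord1 Dsum mulmx_sum_row.
under eq_bigr => j _ do rewrite hsc.
rewrite big_split /=; congr (_ + _).
  by rewrite [RHS]matrix_sum_delta big_ord1; apply: eq_bigr => j _; rewrite !mxE.
by apply: eq_bigr => j _; rewrite /conn rowK.
Qed.

Lemma conn_dmodC n (C : 'M[K]_n) : conn (dmodC C) = C.
Proof.
apply/row_matrixP=> i; rewrite /conn rowK /dmodC dm_delta add0r.
by rewrite -rowE.
Qed.

Lemma is_dmodC n (C : 'M[K]_n) : is_dmod d (dmodC C).
Proof.
split=> [u v|a v]; rewrite /dmodC.
  by rewrite dmD mulmxDl addrACA.
by rewrite dmZ -scalemxAl scalerDr addrA.
Qed.

Lemma iso_form n (C1 C2 P : 'M[K]_n) :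
  (forall v, dmodC C2 (v *m P) = dmodC C1 v *m P) <-> dm P + P *m C2 = C1 *m P.
Proof.
rewrite /dmodC; split=> [h|h v].
  apply/row_matrixP=> i; have := h (delta_mx 0 i).
  rewrite dmM dm_delta !mul0mx !add0r -mulmxA -mulmxDr -!rowE => ->.
  by rewrite !rowE mulmxA.
by rewrite dmM -addrA -mulmxA -mulmxDr h mulmxDl mulmxA.
Qed.

End Deriv.


Lemma ord2 (i : 'I_2) : i = ord0 \/ i = ord_max.
Proof. by case: i => [[|[|//]]] Hi; [left|right]; apply: val_inj. Qed.
Lemma ord2_0m : (ord0 == ord_max :> 'I_2) = false. Proof. by []. Qed.
Lemma ord2_m0 : (ord_max == ord0 :> 'I_2) = false. Proof. by []. Qed.

Section Coord.
Variable K : fieldType.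

Lemma sum2 (F : 'I_2 -> K) : \sum_(i < 2) F i = F ord0 + F ord_max.
Proof. by rewrite big_ord_recr big_ord1 /=; congr (F _ + _); apply: val_inj. Qed.

Lemma sum4 (F : 'I_(2*2) -> K) :
  \sum_(r < 2*2) F r = \sum_(i < 2) \sum_(j < 2) F (mxvec_index i j).
Proof.
rewrite pair_bigA /= (reindex (uncurry (@mxvec_index 2 2))) /=.
  by apply: eq_bigr => -[i j].
by case: (curry_mxvec_bij 2 2) => g h1 h2; exists g => x _; [apply: h1|apply: h2].
Qed.

Lemma mx4P (A B : 'M[K]_(2*2)) :
  (forall i j k l, A (mxvec_index i j) (mxvec_index k l) =
                   B (mxvec_index i j) (mxvec_index k l)) -> A = B.
Proof.
by move=> h; apply/matrixP => r c; case/mxvec_indexP: r => i j;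
  case/mxvec_indexP: c => k l; apply: h.
Qed.

Definition mx22 (a b c e : K) : 'M[K]_2 :=
  \matrix_(i < 2, j < 2) if i == ord0 then (if j == ord0 then a else b)
                         else (if j == ord0 then c else e).

Lemma mx22E a b c e :
  [/\ mx22 a b c e ord0 ord0 = a, mx22 a b c e ord0 ord_max = b,
      mx22 a b c e ord_max ord0 = c & mx22 a b c e ord_max ord_max = e].
Proof. by rewrite !mxE. Qed.

Definition eps := mx22 0 1 (-1) 0.

Lemma mul_delta_mid m n p q (A : 'M[K]_(m,n)) (B : 'M[K]_(p,q)) i j k l :
  (A *m delta_mx i j *m B) k l = A k i * B j l.
Proof.
rewrite mxE (bigD1 j) //= big1 => [|s /negPf nsj]; last first.
  rewrite mxE (bigD1 i) //= big1 => [|t /negPf nti]; last by rewrite mxE nti mulr0.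
  by rewrite mxE nsj andbF mulr0 addr0 mul0r.
rewrite addr0 mxE (bigD1 i) //= big1 => [|t /negPf nti]; last by rewrite mxE nti mulr0.
by rewrite mxE !eqxx mulr1 addr0.
Qed.

Definition KR (CA CB : 'M[K]_2) : 'M[K]_(2*2) :=
  locked (lin_mx (mulmx CA^T) + lin_mx (mulmxr CB)).

Definition X0 : 'M[K]_(2*2) := locked (lin_mx (mulmx eps^T) *m lin_mx (mulmxr eps)).

Lemma KR_vec CA CB (U : 'M[K]_2) :
  mxvec U *m KR CA CB = mxvec (CA^T *m U + U *m CB).
Proof. by rewrite /KR -lock mulmxDr !mul_vec_lin linearD. Qed.

Lemma X0_vec (U : 'M[K]_2) : mxvec U *m X0 = mxvec (eps^T *m U *m eps).
Proof. by rewrite /X0 -lock mulmxA !mul_vec_lin. Qed.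

Lemma entry_vec (A : 'M[K]_(2*2)) i j k l :
  A (mxvec_index i j) (mxvec_index k l) = (mxvec (delta_mx i j) *m A) 0 (mxvec_index k l).
Proof. by rewrite mxvec_delta -rowE mxE. Qed.

Lemma KRE CA CB i j k l : KR CA CB (mxvec_index i j) (mxvec_index k l) =
  CA i k * (l == j)%:R + (k == i)%:R * CB j l.
Proof.
rewrite entry_vec KR_vec mxvecE mxE.
rewrite -[CA^T *m _]mulmx1 -[_ *m CB]mul1mx mulmxA !mul_delta_mid !mxE.
by rewrite [l == j]eq_sym.
Qed.

Lemma X0E i j k l : X0 (mxvec_index i j) (mxvec_index k l) = eps i k * eps j l.
Proof. by rewrite entry_vec X0_vec mxvecE mul_delta_mid mxE. Qed.

Lemma frob (A B : 'M[K]_2) : mxvec A *m (mxvec B)^T = (\tr (A *m B^T))%:M.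
Proof.
apply/matrixP=> a b; rewrite !ord1 !mxE /= mulr1n sum4 /mxtrace.
apply: eq_bigr => i _; rewrite !mxE; apply: eq_bigr => j _.
by rewrite !mxE !mxvecE.
Qed.

End Coord.
Arguments X0 {K}.
Arguments eps {K}.


Ltac ord2split i := case: (ord2 i) => ->.
Ltac simp2 := rewrite ?mxE ?eqxx ?ord2_0m ?ord2_m0 /=.

Section Brute.
Variable K : fieldType.

Lemma X0_sym : (X0 : 'M[K]_(2*2))^T = X0.
Proof.
apply: mx4P => i j k l; rewrite mxE !X0E /eps.
by ord2split i; ord2split j; ord2split k; ord2split l; simp2; ring.
Qed.

Lemma eps_sq : (eps : 'M[K]_2) *m eps = -1.
Proof.
apply/matrixP => i j; rewrite !mxE sum2 /eps.
by ord2split i; ord2split j; simp2; ring.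
Qed.

Lemma X0_sq : (X0 : 'M[K]_(2*2)) *m X0 = 1.
Proof.
apply/row_matrixP => r; rewrite !rowE -[delta_mx 0 r]vec_mxK mulmxA !X0_vec mulmx1.
congr mxvec; rewrite -!mulmxA eps_sq mulmxA -trmx_mul eps_sq.
by rewrite linearN /= trmx1 mulNmx mul1mx mulmxN mulmx1 opprK.
Qed.

Lemma KR_X0 (CA CB : 'M[K]_2) :
  (KR CA CB)^T *m X0 + X0 *m KR CA CB = (\tr CA + \tr CB) *: X0.
Proof.
apply: mx4P => i j k l; rewrite !mxE !sum4 !sum2 !mxE !KRE !X0E /mxtrace !sum2 /eps.
by ord2split i; ord2split j; ord2split k; ord2split l; simp2; ring.
Qed.

End Brute.

Lemma lin_eq (K : fieldType) (x y u k : K) : u = 0 -> x - y = k * u -> x = y.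
Proof. by move=> -> ; rewrite mulr0 => /eqP; rewrite subr_eq0 => /eqP. Qed.

Section SO.
Variable K : fieldType.
Hypothesis h2 : (2%:R : K) != 0.

Local Notation i0 := (mxvec_index (@ord0 1) (@ord0 1)).
Local Notation i1 := (mxvec_index (@ord0 1) (@ord_max 1)).
Local Notation i2 := (mxvec_index (@ord_max 1) (@ord0 1)).
Local Notation i3 := (mxvec_index (@ord_max 1) (@ord_max 1)).

Ltac close_lin h := first [ apply: (lin_eq (k:=1) h); ring
  | apply: (lin_eq (k:=-1) h); ring
  | apply: (lin_eq (k:=2^-1) h); field; exact: h2
  | apply: (lin_eq (k:=-(2^-1)) h); field; exact: h2 ].

Lemma so_X0 (C : 'M[K]_(2*2)) : C^T *m X0 + X0 *m C = 0 ->
  exists CA CB, [/\ \tr CA = 0, \tr CB = 0 & C = KR CA CB].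
Proof.
move=> H.
have hC : forall r s, (C^T *m X0 + X0 *m C) r s = 0 by move=> r s; rewrite H mxE.
Ltac rule hC r s := let h := fresh "h" in
  have h := hC r s; rewrite !mxE !sum4 !sum2 !mxE !X0E /eps !mxE ?eqxx ?ord2_0m ?ord2_m0 /= in h;
  close_lin h.
have e30 : C i3 i0 = 0 by rule hC constr:(i0) constr:(i0).
have e03 : C i0 i3 = 0 by rule hC constr:(i3) constr:(i3).
have e21 : C i2 i1 = 0 by rule hC constr:(i1) constr:(i1).
have e12 : C i1 i2 = 0 by rule hC constr:(i2) constr:(i2).
have e31 : C i3 i1 = C i2 i0 by rule hC constr:(i0) constr:(i1).
have e32 : C i3 i2 = C i1 i0 by rule hC constr:(i0) constr:(i2).
have e33 : C i3 i3 = - C i0 i0 by rule hC constr:(i0) constr:(i3).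
have e22 : C i2 i2 = - C i1 i1 by rule hC constr:(i1) constr:(i2).
have e23 : C i2 i3 = C i0 i1 by rule hC constr:(i1) constr:(i3).
have e13 : C i1 i3 = C i0 i2 by rule hC constr:(i2) constr:(i3).
pose a := (C i0 i0 + C i1 i1) / 2%:R.
pose b := (C i0 i0 - C i1 i1) / 2%:R.
exists (mx22 a (C i0 i2) (C i2 i0) (- a)), (mx22 b (C i0 i1) (C i1 i0) (- b)).
split; first by rewrite /mxtrace sum2 !mxE /=; ring.
  by rewrite /mxtrace sum2 !mxE /=; ring.
apply: mx4P => i j k l; rewrite KRE.
ord2split i; ord2split j; ord2split k; ord2split l; simp2;
  rewrite ?e30 ?e03 ?e21 ?e12 ?e31 ?e32 ?e33 ?e22 ?e23 ?e13 /a /b; field; by rewrite ?h2.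
Qed.
End SO.


Section D2.
Variables (K : fieldType) (d : K -> K).
Hypothesis hd : derivation d.
Local Notation dm := (map_mx d).

Lemma dm_eps : dm (eps : 'M[K]_2) = 0.
Proof.
apply/matrixP => i j; rewrite !mxE /eps.
by ord2split i; ord2split j; simp2; rewrite ?(d0 hd) ?(d1 hd) ?(dN1 hd).
Qed.

Lemma dm_X0 : dm (X0 : 'M[K]_(2*2)) = 0.
Proof.
apply: mx4P => i j k l; rewrite !mxE X0E (dM hd).
have e : forall a b, d (eps a b) = 0 by move=> a b; have := congr1 (fun M : 'M[K]_2 => M a b) dm_eps; rewrite !mxE.
by rewrite !e mulr0 mul0r addr0.
Qed.

Lemma zcancel (V : zmodType) (a b c x y : V) :
  a + b + c + (x + - a) + (y + - c) = b + x + y.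
Proof.
rewrite [x + _]addrC [y + _]addrC !addrA.
rewrite -[a + b + c + - a]addrA [c + - a]addrC addrA [a + b]addrC addrK.
by rewrite [b + c + x + _]addrAC addrK.
Qed.

Definition hor n (C F : 'M[K]_n) := dm F + C^T *m F + F *m C.

Lemma transport n (C1 C2 P F : 'M[K]_n) : P *m C2 = C1 *m P - dm P ->
  hor C2 (P^T *m F *m P) = P^T *m hor C1 F *m P.
Proof.
move=> h; rewrite /hor !(dmM hd) (dmT d).
have -> : C2^T *m (P^T *m F *m P) = (P *m C2)^T *m F *m P by rewrite trmx_mul !mulmxA.
rewrite -[P^T *m F *m P *m C2]mulmxA h (linearB trmx) /= !trmx_mul.
rewrite ?mulmxDl ?mulmxDr ?mulmxBl ?mulmxBr ?mulmxDl ?mulmxA.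
by rewrite !mulNmx mulmxN; apply: zcancel.
Qed.

Lemma tensor_form (DA DB : 'rV[K]_2 -> 'rV[K]_2) (w : 'rV[K]_(2*2)) :
  tensorD d DA DB w = dmodC d (KR (conn DA) (conn DB)) w.
Proof.
rewrite /tensorD /dmodC -[w in RHS]vec_mxK KR_vec map_mxvec -addrA.
by rewrite linearD.
Qed.

Lemma det_triv_p n (D : 'rV[K]_n -> 'rV[K]_n) : det_trivial d D ->
  exists p, p != 0 /\ d p = \tr (conn D) * p.
Proof.
case=> P [Pu hP]; have := hP 1%:M; rewrite mul1mx /unitD /detD (dm1 hd) add0r.
move/matrixP => /(_ 0 0); rewrite !mxE big_ord1 !mxE => h.
exists (P 0 0); split; last first.
  by rewrite h; have -> : (0 == ord0 :> 'I_1) = true by []; rewrite mulr1.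
by move: Pu; rewrite unitmxE det_mx11 unitfE.
Qed.

Lemma det_triv_0 n (C : 'M[K]_n) : \tr C = 0 -> det_trivial d (dmodC d C).
Proof.
move=> t0; exists 1%:M; split; first exact: unitmx1.
by move=> v; rewrite !mulmx1 /unitD /detD (conn_dmodC hd) t0 scale0r addr0.
Qed.

End D2.

Section Rows.
Variable K : fieldType.

Lemma rowform m n p (A : 'M[K]_(m,n)) (M : 'M[K]_n) (B : 'M[K]_(p,n)) a b :
  (A *m M *m B^T) a b = (row a A *m M *m (row b B)^T) 0 0.
Proof.
rewrite -row_mul mxE [RHS]mxE; apply: eq_bigr => s _; rewrite !mxE.
by [].
Qed.

Definition Wt : 'M[K]_(2, 2*2) := \matrix_(a < 2) mxvec (delta_mx ord0 a).

Lemma Wt_iso : Wt *m X0 *m Wt^T = 0.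
Proof.
apply/matrixP => a b; rewrite rowform !rowK X0_vec frob !mxE /mxtrace sum2 !mxE !sum2 !mxE /eps.
by ord2split a; ord2split b; do 4 (rewrite ?sum2; simp2); ring.
Qed.

Lemma Wt_rank : \rank Wt = 2.
Proof.
apply/eqP; apply/row_freeP; exists Wt^T.
have -> : Wt *m Wt^T = Wt *m 1%:M *m Wt^T by rewrite mulmx1.
apply/matrixP => a b; rewrite rowform !rowK mulmx1 frob !mxE /mxtrace sum2 !mxE !sum2 !mxE.
by ord2split a; ord2split b; do 4 (rewrite ?sum2; simp2); ring.
Qed.

End Rows.
Arguments Wt {K}.


Section NF.
Variable K : fieldType.
Hypothesis h2 : (2%:R : K) != 0.

Definition idx (r : 'I_(2*2)) : 'I_2 * 'I_2 :=
  enum_val (cast_ord (esym (@mxvec_cast 2 2)) r).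

Lemma idxK i j : idx (mxvec_index i j) = (i, j).
Proof. by rewrite /idx /mxvec_index cast_ordK enum_rankK. Qed.

Lemma mxoppE m n (A : 'M[K]_(m,n)) i j : (- A) i j = - A i j.
Proof. by rewrite mxE. Qed.

Lemma det_X0 : \det (X0 : 'M[K]_(2*2)) != 0.
Proof.
apply/negP => /eqP h; have := congr1 determinant (@X0_sq K).
by rewrite det_mulmx h mul0r det1 => /eqP; rewrite eq_sym oner_eq0.
Qed.

Lemma normal_form (F : 'M[K]_(2*2)) (W : 'M[K]_(2, 2*2)) :
  F^T = F -> \det F != 0 -> \rank W = 2 -> W *m F *m W^T = 0 ->
  exists P : 'M[K]_(2*2), P \in unitmx /\ P^T *m F *m P = X0.
Proof.
move=> Fs Fd rW G1.
have Fu : F \in unitmx by rewrite unitmxE unitfE.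
have rWF : row_free (W *m F).
  by rewrite /row_free mxrankMfree ?row_free_unit // rW.
set B := pinvmx (W *m F).
have hB : W *m F *m B = 1%:M by exact: mulmxVp.
set Z0 := B^T.
set S := Z0 *m F *m Z0^T.
set c : K := 2%:R^-1.
set Z := Z0 - c *: (S *m W).
have St : S^T = S by rewrite /S !trmx_mul trmxK Fs mulmxA.
have G2 : W *m F *m Z^T = 1%:M.
  rewrite /Z linearB linearZ /= trmx_mul trmxK mulmxBr -scalemxAr mulmxA G1.
  by rewrite mul0mx scaler0 subr0.
have G3 : Z *m F *m W^T = 1%:M.
  by have := congr1 trmx G2; rewrite !trmx_mul trmxK Fs trmx1 mulmxA.
have G5 : Z0 *m F *m W^T = 1%:M.
  by rewrite /Z0; have := congr1 trmx hB; rewrite !trmx_mul Fs trmx1 mulmxA.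
have G4 : Z *m F *m Z^T = 0.
  rewrite {2}/Z linearB linearZ /= trmx_mul trmxK mulmxBr -scalemxAr mulmxA G3 mul1mx.
  rewrite /Z mulmxBl mulmxBl -!scalemxAl St.
  have -> : Z0 *m F *m B = S by rewrite /S /Z0 trmxK.
  have -> : S *m W *m F *m B = S.
    by rewrite -!mulmxA [W *m (F *m B)]mulmxA hB mulmx1 !mulmxA.
  rewrite -{1}[S]scale1r -scalerBl -scalerBl.
  have -> : 1 - c - c = 0 by rewrite /c; field.
  by rewrite scale0r.
pose g (i j : 'I_2) : 'rV[K]_(2*2) :=
  if i == ord0 then row j W else (if j == ord0 then - row ord_max Z else row ord0 Z).
pose R : 'M[K]_(2*2) := \matrix_(r < 2*2) g (idx r).1 (idx r).2.
have rowR : forall i j, row (mxvec_index i j) R = g i j by move=> i j; rewrite rowK idxK.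
have RF : R *m F *m R^T = X0.
  apply: mx4P => i j k l; rewrite rowform !rowR X0E /g /eps.
  ord2split i; ord2split j; ord2split k; ord2split l;
   rewrite ?eqxx ?ord2_0m ?ord2_m0 /= ?linearN /= ?mulNmx ?mulmxN ?mxoppE -rowform ?G1 ?G2 ?G3 ?G4;
   simp2; ring.
have Ru : R \in unitmx.
  rewrite unitmxE unitfE; apply/negP => /eqP h0; move: det_X0.
  by rewrite -RF !det_mulmx det_tr h0 !mul0r eqxx.
exists R^T; split; first by rewrite unitmx_tr.
by rewrite trmxK.
Qed.
End NF.

Unset Implicit Arguments. Set Strict Implicit. Set Printing Implicit Defensive.

Theorem theorem6p2 (K : fieldType) (d : K -> K) (hd : derivation d)
  (hchar : [pchar K] =i pred0)
  (DM : 'rV[K]_4 -> 'rV[K]_4) (hM : is_dmod d DM) (hdetM : det_trivial d DM) :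
  (exists (DA DB : 'rV[K]_2 -> 'rV[K]_2),
      [/\ is_dmod d DA, is_dmod d DB, det_trivial d DA, det_trivial d DB &
          dmod_iso (n := (2 * 2)%N) DM (tensorD d DA DB)])
  <->
  (exists F : 'M[K]_4,
      [/\ is_sym2_elt F, tensor2D d DM F = 0, nondeg_form F &
          has_isotropic_subsp 2 F]).
Proof.
have h2 : (2%:R : K) != 0 by have /pcharf0P h := hchar; rewrite h.
split.
- move=> [DA [DB [hA hB dA dB [P [Pu hP]]]]].
  set CA := conn DA; set CB := conn DB; set CM := conn DM; set KT := KR CA CB.
  have iso : map_mx d P + P *m KT = CM *m P.
    apply/(iso_form hd) => v; have := hP v.
    by rewrite tensor_form (dmod_form hM).
  have [pA [pA0 dpA]] := det_triv_p hd dA.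
  have [pB [pB0 dpB]] := det_triv_p hd dB.
  have pAB : pA * pB != 0 by rewrite mulf_neq0.
  set g := (pA * pB)^-1.
  have dg : d g = - (\tr CA + \tr CB) * g.
    rewrite /g (dV hd) // (dM hd) dpA dpB -/CA -/CB; field.
    by rewrite pA0 pB0.
  set Xt := g *: (X0 : 'M[K]_(2*2)).
  have hXt : hor d KT Xt = 0.
    rewrite /hor /Xt (dmZ hd) dm_X0 // scaler0 addr0 -scalemxAr -scalemxAl -addrA -scalerDr /KT.
    by rewrite KR_X0 scalerA -scalerDl dg mulNr [g * _]mulrC addNr scale0r.
  set Q := invmx P.
  set F := Q^T *m Xt *m Q.
  have hyp : P *m KT = CM *m P - map_mx d P by rewrite -iso addrC addKr.
  have trans := transport hd F hyp.
  have PFP : P^T *m F *m P = Xt.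
    rewrite /F !mulmxA -trmx_mul mulVmx // trmx1 mul1mx -mulmxA mulVmx // mulmx1.
    by [].
  have hF : hor d CM F = 0.
    have : P^T *m hor d CM F *m P = 0 by rewrite -trans PFP hXt.
    move/(congr1 (fun M => Q^T *m M *m Q)); rewrite mulmx0 mul0mx.
    by rewrite !mulmxA -trmx_mul mulmxV // trmx1 mul1mx -mulmxA mulmxV // mulmx1.
  exists F; split.
  + by rewrite /is_sym2_elt /F !trmx_mul trmxK /Xt linearZ /= X0_sym !mulmxA.
  + by rewrite /tensor2D -hF.
  + rewrite /nondeg_form /F !det_mulmx det_tr detZ.
    have dQ : \det Q != 0 by rewrite -unitfE -unitmxE unitmx_inv.
    by rewrite !mulf_neq0 // ?expf_neq0 ?invr_neq0 // det_X0.
  + exists (Wt *m P^T); split.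
      by rewrite mxrankMfree ?Wt_rank // row_free_unit unitmx_tr.
    rewrite trmx_mul trmxK !mulmxA -[Wt *m P^T *m Q^T]mulmxA -trmx_mul mulVmx // trmx1 mulmx1.
    rewrite -[Wt *m Xt *m Q *m P]mulmxA mulVmx // mulmx1.
    by rewrite /Xt -scalemxAr -scalemxAl Wt_iso scaler0.
- move=> [F [Fs hF Fd [W [rW WF]]]].
  have [P [Pu PF]] := normal_form h2 Fs Fd rW WF.
  set CM := conn DM.
  set CT := invmx P *m (CM *m P - map_mx d P).
  have hPC : P *m CT = CM *m P - map_mx d P by rewrite /CT mulKVmx.
  have := transport hd F hPC; rewrite PF.
  have -> : hor d CM F = 0 by rewrite /hor -hF.
  rewrite mulmx0 mul0mx /hor dm_X0 // add0r => H.
  have [CA [CB [tA tB eC]]] := so_X0 h2 H.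
  exists (dmodC d CA), (dmodC d CB); split.
  + exact: is_dmodC.
  + exact: is_dmodC.
  + by apply: det_triv_0.
  + by apply: det_triv_0.
  + exists P; split => // v.
    rewrite tensor_form !(conn_dmodC hd) -eC (dmod_form hM).
    by move: v; apply/(iso_form hd); rewrite hPC addrC subrK.
Qed.
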